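(* Let $K\ge1$ and fix $a_2,\dots,a_{K+1}\ge0$. For $x\ge0$ let $G(x)=P^{(1)}_{K+1}(x,a_2,\dots,a_{K+1})$ (path $v_0,\dots,v_{K+1}$). Let $\mathcal A_\theta$ be an $L$-layer MinAgg GNN with exactly $K$ message passing layers $\ell_1<\dots<\ell_K$. If for some $k\in[K]$ and some set $D\subseteq[0,\infty)$ the map $x\mapsto h^{(\ell_k)}_{v_{k+1}}(G(x))$ is constant on $D$, then $x\mapsto h^{(L)}_{v_{K+1}}(G(x))$ is also constant on $D$.
   Context: Attributed graphs have nonnegative edge weights and node features, a self-loop of weight $0$ at each node, and $\mathcal N(v)=\{v\}\cup\{u:\{u,v\}\in E\}$. A large constant $\beta>0$ encodes ''infinite distance''. For a source $s$, $\mathrm d^{(t)}(s,v)$ is the minimal weight of a walk from $s$ to $v$ with at most $t$ edges ($\beta$ if none). $P^{(t)}_k(a_1,\dots,a_k)$: path $v_0,\dots,v_k$, edge $\{v_{i-1},v_i\}$ of weight $a_i$, features $x_{v_i}=\mathrm d^{(t)}(v_0,v_i)$; in particular $P^{(1)}_{K+1}(x,a_2,\dots)$ has $x_{v_0}=0$, $x_{v_1}=x$, $x_{v_i}=\beta$ for $i\ge2$. MinAgg GNN: for each $\ell\in[L]$, ReLU MLPs ($x^{(j)}=\sigma(W_jx^{(j-1)}+b_j)$) $f^{\mathrm{agg},(\ell)}:\mathbb R^{d_{\ell-1}+1}\to\mathbb R^d$ and $f^{\mathrm{up},(\ell)}:\mathbb R^{d+d_{\ell-1}}\to\mathbb R^{d_\ell}$,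 $d_0=d_L=1$, $d_\ell=d$ otherwise; $h^{(0)}_v=x_v$, $h^{(\ell)}_v=f^{\mathrm{up},(\ell)}\big(\min_{u\in\mathcal N(v)}f^{\mathrm{agg},(\ell)}(h^{(\ell-1)}_u\oplus x_{(u,v)})\oplus h^{(\ell-1)}_v\big)$ (coordinatewise min, $\oplus$ concatenation). Node component of $f^{\mathrm{agg},(\ell)}$: its first $d_{\ell-1}$ input coordinates. A function on $\mathbb R^n_{\ge0}$ depends on a set $S$ of coordinates if some $x\ne y$ agreeing outside $S$ have different images. Layer $\ell$ is message passing if $f^{\mathrm{agg},(\ell)}$ depends on its node component, stationary otherwise. *)

(* Defs.v *)
From HB Require Import structures.
From mathcomp Require Import all_boot all_order all_algebra.
From mathcomp Require Import reals.
Set Implicit Arguments. Unset Strict Implicit. Unset Printing Implicit Defensive.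
Import Order.TTheory GRing.Theory Num.Theory.
Local Open Scope ring_scope.

Section Defs.
Variable R : realType.

Definition relu n (v : 'cV[R]_n) : 'cV[R]_n := map_mx (fun t => Num.max t 0) v.

Inductive mlp : nat -> nat -> Type :=
| MLast n m of 'M[R]_(m, n) & 'cV[R]_m : mlp n m
| MCons n k m of 'M[R]_(k, n) & 'cV[R]_k & mlp k m : mlp n m.

Fixpoint mlp_eval n m (f : mlp n m) : 'cV[R]_n -> 'cV[R]_m :=
  match f in mlp n m return 'cV[R]_n -> 'cV[R]_m with
  | MLast _ _ W b => fun x => relu (W *m x + b)
  | MCons _ _ _ W b g => fun x => mlp_eval g (relu (W *m x + b))
  end.

Definition dimL (L d l : nat) : nat := if (l == 0%N) || (l == L) then 1%N else d.

(* An L-layer MinAgg GNN with hidden dimension d: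
   agg l = f^{agg,(l)} : R^{d_{l-1}+1} -> R^d,
   up  l = f^{up,(l)}  : R^{d+d_{l-1}} -> R^{d_l}   (used for l in [1, L]). *)
Record GNN := {
  gL : nat;
  gd : nat;
  agg : forall l : nat, mlp (dimL gL gd l.-1 + 1) gd;
  up  : forall l : nat, mlp (gd + dimL gL gd l.-1) (dimL gL gd l) }.

(* "f depends on a set S of coordinates" as a function on R^n_{>=0}, specialised to
   S = the node component (top block) of an input col_mx u e, e the edge coordinate. *)
Definition nonneg_vec n (v : 'cV[R]_n) : Prop := forall i, 0 <= v i 0.

Definition message_passing (N : GNN) (l : nat) : Prop :=
  exists (u u' : 'cV[R]_(dimL (gL N) (gd N) l.-1)) (e : 'cV[R]_1),
    nonneg_vec u /\ nonneg_vec u' /\ nonneg_vec e /\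
    col_mx u e <> col_mx u' e /\
    mlp_eval (agg N l) (col_mx u e) <> mlp_eval (agg N l) (col_mx u' e).

(* Attributed graph on nodes 0..n-1: symmetric irreflexive adjacency, edge weights,
   scalar node features. Self-loops (weight 0) are added by the GNN below. *)
Record AGraph := {
  gn : nat;
  gadj : nat -> nat -> bool;
  gw : nat -> nat -> R;
  gx : nat -> R }.

Definition nbrs (G : AGraph) (v : nat) : seq nat :=
  [seq u <- iota 0 (gn G) | gadj G u v].

Definition ew (G : AGraph) (u v : nat) : R := if u == v then 0 else gw G u v.

Definition vmin n (u v : 'cV[R]_n) : 'cV[R]_n := \col_i Num.min (u i 0) (v i 0).

Fixpoint hstate (N : GNN) (G : AGraph) (l : nat) : nat -> 'cV[R]_(dimL (gL N) (gd N) l) :=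
  match l return nat -> 'cV[R]_(dimL (gL N) (gd N) l) with
  | 0 => fun v => const_mx (gx G v)
  | l'.+1 =>
      let hp := hstate N G l' in
      fun v =>
        let msg u := mlp_eval (agg N l'.+1) (col_mx (hp u) (const_mx (ew G u v))) in
        mlp_eval (up N l'.+1)
          (col_mx (foldr (@vmin _) (msg v) [seq msg u | u <- nbrs G v]) (hp v))
  end.

(* The path graph P^{(1)}_{K+1}(x, a_2, ..., a_{K+1}) with nodes v_0, ..., v_{K+1}
   (encoded as 0..K+1): edge {v_{i-1}, v_i} has weight x if i = 1 and a_i otherwise;
   features x_{v_0} = 0, x_{v_1} = x, x_{v_i} = beta for i >= 2. *)
Definition pathG (K : nat) (beta x : R) (a : nat -> R) : AGraph := {|
  gn := K.+2;
  gadj := fun u v => (u.+1 == v) || (v.+1 == u);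
  gw := fun u v => let i := maxn u v in if i == 1%N then x else a i;
  gx := fun v => if v == 0%N then 0 else if v == 1%N then x else beta |}.

End Defs.

(* Main.v *)
Require Import Defs.
From HB Require Import structures.
From mathcomp Require Import all_boot all_order all_algebra.
From mathcomp Require Import reals.
From mathcomp Require Import zify.
Import Order.TTheory GRing.Theory Num.Theory.
Local Open Scope ring_scope.

Lemma relu_nn (R : realType) n (v : 'cV[R]_n) : nonneg_vec (relu v).
Proof. by move=> i; rewrite mxE le_max lexx orbT. Qed.

Lemma mlp_nn (R : realType) n m (f : mlp R n m) z : nonneg_vec (mlp_eval f z).
Proof. by elim: f z => [n' m' W b|n' k m' W b g IH] z /=; [apply: relu_nn|apply: IH]. Qed.

Lemma step (R : realType) (N : GNN R) (G1 G2 : AGraph R) l v :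
  nbrs G1 v = nbrs G2 v ->
  (forall u, u \in v :: nbrs G1 v ->
    mlp_eval (agg N l.+1) (col_mx (hstate N G1 l u) (const_mx (ew G1 u v))) =
    mlp_eval (agg N l.+1) (col_mx (hstate N G2 l u) (const_mx (ew G2 u v)))) ->
  hstate N G1 l v = hstate N G2 l v ->
  hstate N G1 l.+1 v = hstate N G2 l.+1 v.
Proof.
move=> Hn Hm Hv /=; rewrite -Hn (Hm v (mem_head _ _)) Hv.
congr (mlp_eval _ (col_mx (foldr _ _ _) _)).

by apply/eq_in_map => u Hu; apply: Hm; rewrite in_cons Hu orbT.
Qed.

Lemma stat (R : realType) (N : GNN R) l (u u' : 'cV[R]_(dimL (gL N) (gd N) l.-1)) (e : 'cV[R]_1) :
  ~ message_passing N l -> nonneg_vec u -> nonneg_vec u' -> nonneg_vec e ->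
  mlp_eval (agg N l) (col_mx u e) = mlp_eval (agg N l) (col_mx u' e).
Proof.
move=> Hmp Hu Hu' He.
case: (eqVneq (mlp_eval (agg N l) (col_mx u e)) (mlp_eval (agg N l) (col_mx u' e))) => // Hne; exfalso; apply: Hmp.
exists u, u', e; do 4 (split => //); first by move=> Heq; move: Hne; rewrite Heq eqxx.
by apply/eqP.
Qed.

Lemma nbrs_mem (R : realType) K beta (x : R) a u v :
  u \in nbrs (pathG K beta x a) v -> (u < K.+2)%N /\ ((u.+1 == v) || (v.+1 == u)).
Proof. by rewrite /nbrs mem_filter mem_iota /= add0n => /andP[-> ->]. Qed.

Lemma ew_eq (R : realType) K beta (x y : R) a u v : (2 <= v)%N ->
  ew (pathG K beta x a) u v = ew (pathG K beta y a) u v.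
Proof.
move=> Hv; rewrite /ew /=; case: (u == v) => //.
have -> : (maxn u v == 1%N) = false by apply/eqP; lia.
by [].
Qed.

Lemma ew_nn (R : realType) K beta (x : R) a u v :
  (forall i, (2 <= i <= K.+1)%N -> 0 <= a i) -> (2 <= v <= K.+1)%N -> (u < K.+2)%N ->
  0 <= ew (pathG K beta x a) u v.
Proof.
move=> Ha Hv Hu; rewrite /ew /=; case: (u == v) => //.
have -> : (maxn u v == 1%N) = false by apply/eqP; lia.
apply: Ha; lia.
Qed.

Lemma hs_nn (R : realType) K beta (x : R) a (N : GNN R) l u :
  0 <= x -> 0 < beta -> nonneg_vec (hstate N (pathG K beta x a) l u).
Proof.
move=> Hx Hb; case: l => [|l] /=; last exact: mlp_nn.
move=> i; rewrite mxE /=; case: (u == 0%N) => //; case: (u == 1%N) => //.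
exact: ltW.
Qed.

Lemma cst_nn (R : realType) (e : R) : 0 <= e -> nonneg_vec (const_mx e : 'cV[R]_1).
Proof. by move=> He i; rewrite mxE. Qed.
Arguments nbrs_mem {R K beta x a u v}.
Arguments stat {R N l u u' e}.
Arguments hs_nn {R K beta x a N l u}.

Definition Qp {R : realType} K (a : nat -> R) beta (N : GNN R) (x y : R) l c :=
  forall j, (c <= j <= K.+1)%N ->
    hstate N (pathG K beta x a) l j = hstate N (pathG K beta y a) l j.

Lemma stepM (R : realType) K (a : nat -> R) beta (N : GNN R) (x y : R) l c :
  (1 <= c)%N -> Qp K a beta N x y l c -> Qp K a beta N x y l.+1 c.+1.
Proof.
move=> Hc HQ j Hj; apply: step => //; last by apply: HQ; lia.
move=> u; rewrite in_cons => /orP[/eqP->|Hu].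
  rewrite HQ; last lia.
  by rewrite (ew_eq _ _ _ _ y) //; lia.
have [Hu1 Hu2] := nbrs_mem Hu.
rewrite HQ; first by rewrite (ew_eq _ _ _ _ y) //; lia.
by move: Hu2 => /orP[/eqP|/eqP]; lia.
Qed.

Lemma stepS (R : realType) K (a : nat -> R) beta (N : GNN R) (x y : R) l c :
  (forall i, (2 <= i <= K.+1)%N -> 0 <= a i) -> 0 < beta -> 0 <= x -> 0 <= y ->
  (2 <= c)%N -> ~ message_passing N l.+1 ->
  Qp K a beta N x y l c -> Qp K a beta N x y l.+1 c.
Proof.
move=> Ha Hb Hx Hy Hc Hmp HQ j Hj; apply: step => //; last by apply: HQ; lia.
move=> u Hu.
have Hu' : (u < K.+2)%N.
  move: Hu; rewrite in_cons => /orP[/eqP->|Hu]; first lia.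
  by case: (nbrs_mem Hu).
rewrite (ew_eq _ _ _ _ y); last lia.
apply: stat => //; try exact: hs_nn.
apply: cst_nn; apply: ew_nn => //; lia.
Qed.

Lemma stepsS (R : realType) K (a : nat -> R) beta (N : GNN R) (x y : R) l1 l2 c :
  (forall i, (2 <= i <= K.+1)%N -> 0 <= a i) -> 0 < beta -> 0 <= x -> 0 <= y ->
  (2 <= c)%N -> (forall l, (l1 < l <= l2)%N -> ~ message_passing N l) ->
  (l1 <= l2)%N ->
  Qp K a beta N x y l1 c -> Qp K a beta N x y l2 c.
Proof.
move=> Ha Hb Hx Hy Hc; elim: l2 => [|l2 IH] Hmp Hl.
  by have -> : l1 = 0%N by lia.
case: (eqVneq l1 l2.+1) => [-> //|Hne] HQ.
apply: stepS => //; first by apply: Hmp; lia.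
apply: IH => //; last by lia.
by move=> l Hl'; apply: Hmp; lia.
Qed.

Theorem mainTheorem11 (R : realType) (K : nat) (a : nat -> R) (beta : R)
    (N : GNN R) (lk : nat -> nat) (k : nat) (D : R -> Prop) :
  (1 <= K)%N ->
  (forall i, (2 <= i <= K.+1)%N -> 0 <= a i) ->
  0 < beta ->
  (* l_1 < ... < l_K are exactly the message passing layers among 1..L *)
  (forall i j, (1 <= i)%N -> (i < j)%N -> (j <= K)%N -> (lk i < lk j)%N) ->
  (forall i, (1 <= i <= K)%N -> (1 <= lk i <= gL N)%N) ->
  (forall l, (1 <= l <= gL N)%N ->
     (message_passing N l <-> exists i, (1 <= i <= K)%N /\ lk i = l)) ->
  (1 <= k <= K)%N ->
  (forall x, D x -> 0 <= x) ->
  (forall x y, D x -> D y ->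
     hstate N (pathG K beta x a) (lk k) k.+1 = hstate N (pathG K beta y a) (lk k) k.+1) ->
  forall x y, D x -> D y ->
     hstate N (pathG K beta x a) (gL N) K.+1 = hstate N (pathG K beta y a) (gL N) K.+1.
Proof.
move=> HK1 Ha Hb Hmono Hrange HMP Hk HD Hconst x y Dx Dy.
have Hx := HD x Dx; have Hy := HD y Dy.
have nonMP : forall l, (1 <= l <= gL N)%N ->
    (forall j, (1 <= j <= K)%N -> lk j != l) -> ~ message_passing N l.
  move=> l Hl Hj Hm; have [i [Hi Hil]] := (HMP l Hl).1 Hm.
  by move: (Hj i Hi); rewrite Hil eqxx.
have Hle : forall i j, (1 <= i)%N -> (i <= j)%N -> (j <= K)%N -> (lk i <= lk j)%N.
  move=> i j Hi Hij HjK; case: (eqVneq i j) => [->//|Hne].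
  by apply: ltnW; apply: Hmono => //; lia.
have Q0 : Qp K a beta N x y 0 2.
  move=> j Hj /=.
  have -> : (j == 0%N) = false by apply/eqP; lia.
  by have -> : (j == 1%N) = false by apply/eqP; lia.
have Init : Qp K a beta N x y (lk 1%N) 3.
  have H1 := Hrange 1%N (ltac:(lia)).
  have -> : lk 1%N = (lk 1%N).-1.+1 by lia.
  apply: stepM => //; apply: (@stepsS R K a beta N x y (0%N)) => //.
  move=> l Hl; apply: nonMP; first lia.
  move=> j Hj; have := Hle 1%N j (ltac:(lia)) (ltac:(lia)) (ltac:(lia)); move=> H'; apply/eqP; lia.
have Adv : forall i, (1 <= i < K)%N -> forall c, (2 <= c)%N ->
    Qp K a beta N x y (lk i) c -> Qp K a beta N x y (lk i.+1) c.+1.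
  move=> i Hi c Hc HQ.
  have H1 := Hrange i.+1 (ltac:(lia)).
  have H2 := Hmono i i.+1 (ltac:(lia)) (ltac:(lia)) (ltac:(lia)).
  have -> : lk i.+1 = (lk i.+1).-1.+1 by lia.
  apply: stepM; first lia.
  apply: (@stepsS R K a beta N x y (lk i)) => //; last lia.
  move=> l Hl; apply: nonMP; first lia.
  move=> j Hj; apply/eqP.
  case: (leqP j i) => Hji.
    have := Hle j i (ltac:(lia)) Hji (ltac:(lia)); lia.
  have := Hle i.+1 j (ltac:(lia)) Hji (ltac:(lia)); lia.
have Fin : forall c, (2 <= c)%N ->
    Qp K a beta N x y (lk K) c -> Qp K a beta N x y (gL N) c.
  move=> c Hc HQ.
  have H1 := Hrange K (ltac:(lia)).
  apply: (@stepsS R K a beta N x y (lk K)) => //; last lia.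
  move=> l Hl; apply: nonMP; first lia.
  move=> j Hj; apply/eqP; have := Hle j K (ltac:(lia)) (ltac:(lia)) (ltac:(lia)); lia.
have QA : forall i, (1 <= i <= K)%N -> Qp K a beta N x y (lk i) i.+2.
  elim=> [|i IH] Hi; first lia.
  case: (eqVneq i 0%N) => [->//|Hi0].
  apply: Adv; [lia|lia|apply: IH; lia].
have QB : Qp K a beta N x y (lk k) k.+1.
  move=> j Hj; case: (eqVneq j k.+1) => [->|Hne]; first exact: Hconst.
  apply: (QA k) => //; lia.
have QC : forall n, (k + n <= K)%N -> Qp K a beta N x y (lk (k + n)%N) (k + n)%N.+1.
  elim=> [|n IH] Hn; first by rewrite addn0; exact: QB.
  rewrite addnS; apply: Adv; [lia|lia|apply: IH; lia].
have QK : Qp K a beta N x y (lk K) K.+1.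
  have := QC (K - k)%N (ltac:(lia)); by rewrite subnKC //; lia.
by apply: (Fin K.+1) => //; lia.
Qed.
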